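(* Let $X$ be a complex vector space equipped with an inner product $\langle\cdot,\cdot\rangle'$ with induced norm $\|x\|'=\sqrt{\langle x,x\rangle'}$. Suppose that for each $\alpha\in(0,1]$ we are given a map $\langle\cdot,\cdot\rangle_\alpha : X\times X\to\mathbb{C}$ and real constants $A_\alpha,B_\alpha$ with $0<A_\alpha\le B_\alpha<\infty$ such that for all $x,y\in X$ and all $\alpha\in(0,1]$, \[ A_\alpha\,|\langle x,y\rangle'| \le |\langle x,y\rangle_\alpha| \le B_\alpha\,|\langle x,y\rangle'|. \] For $x\in X$ put $\|x\|_\alpha=\sqrt{\langle x,x\rangle_\alpha}$ (any complex square root), so $|\|x\|_\alpha^2|=|\langle x,x\rangle_\alpha|$. Then for all $x,y\in X$ and all $\alpha\in(0,1]$: (i) (Fuzzy Cauchy–Schwarz) $\displaystyle |\langle x,y\rangle_\alpha|\le \frac{B_\alpha}{A_\alpha}\,\big|\|x\|_\alpha\|y\|_\alpha\big|$; (ii) (Fuzzy parallelogram inequality) \[ \frac{2A_\alpha}{B_\alpha}\big(|\|x\|_\alpha^2|+|\|y\|_\alpha^2|\big)\le |\|x+y\|_\alpha^2|+|\|x-y\|_\alpha^2|\le \frac{2B_\alpha}{A_\alpha}\big(|\|x\|_\alpha^2|+|\|y\|_\alpha^2|\big); \] (iii) (Fuzzy polarization inequality, real case) if $X$ is a real vector space and $\langle\cdot,\cdot\rangle'$ is a real inner product (the same bounds being assumed), then \[ |\|x+y\|_\alpha^2|\le \frac{B_\alpha}{A_\alpha}\big(4|\langle x,y\rangle_\alpha|+|\|x-y\|_\alpha^2|\big);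 \] (iv) (Fuzzy Bessel inequality) if $\{e_i\}_{i=1}^\infty$ is an orthonormal sequence in $X$ with respect to $\langle\cdot,\cdot\rangle'$, then \[ \sum_{i=1}^\infty |\langle x,e_i\rangle_\alpha|^2\le \frac{B_\alpha^2}{A_\alpha}\,|\|x\|_\alpha^2|. \]
   Context: The map $\langle\cdot,\cdot\rangle_\alpha$ satisfying the two-sided bound is the paper's (simplified) ''fuzzy inner product'' relative to the classical inner product $\langle\cdot,\cdot\rangle'$; $\|\cdot\|_\alpha$ is its induced fuzzy norm. *)

(* Defs.v *)
From HB Require Import structures.
From mathcomp Require Import all_boot all_order all_algebra.
From mathcomp Require Import all_classical all_reals all_analysis.
From mathcomp Require Import complex.
Set Implicit Arguments. Unset Strict Implicit. Unset Printing Implicit Defensive.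
Import Order.TTheory GRing.Theory Num.Theory.
Local Open Scope ring_scope.
Local Open Scope complex_scope.

Definition cmod (R : realType) (z : R[i]) : R := Normc.normc z.

Definition is_cinner_product (R : realType) (V : lmodType R[i])
  (ip : V -> V -> R[i]) : Prop :=
  (forall (a : R[i]) (x y z : V), ip (a *: x + y) z = a * ip x z + ip y z) /\
  (forall x y : V, ip y x = conjc (ip x y)) /\
  (forall x : V, (0 <= ip x x)%R) /\
  (forall x : V, ip x x = 0 -> x = 0).

Definition is_rinner_product (R : realType) (W : lmodType R)
  (ip : W -> W -> R) : Prop :=
  (forall (a : R) (x y z : W), ip (a *: x + y) z = a * ip x z + ip y z) /\
  (forall x y : W, ip y x = ip x y) /\
  (forall x : W, 0 <= ip x x) /\
  (forall x : W, ip x x = 0 -> x = 0).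

(* Main.v *)
Require Import Defs.
From HB Require Import structures.
From mathcomp Require Import all_boot all_order all_algebra.
From mathcomp Require Import all_classical all_reals all_analysis.
From mathcomp Require Import complex.
From mathcomp Require Import ring lra.
Import Order.TTheory GRing.Theory Num.Theory.
Local Open Scope ring_scope.
Local Open Scope complex_scope.

Lemma cmodC (R : realType) (z : R[i]) : `|z| = (cmod z)%:C.
Proof. reflexivity. Qed.

Section IP.
Context {R : realType} {V : lmodType R[i]} {ip : V -> V -> R[i]}
  (H : is_cinner_product ip).

Lemma ipD1 x y z : ip (x + y) z = ip x z + ip y z.
Proof. have [L _] := H. have := L 1 x y z. rewrite scale1r mul1r. done. Qed.

Lemma ip01 z : ip 0 z = 0.
Proof. by apply: (addrI (ip 0 z)); rewrite addr0 -ipD1 addr0. Qed.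

Lemma ipZ1 a x z : ip (a *: x) z = a * ip x z.
Proof. by have [L _] := H; rewrite -(addr0 (a *: x)) L ip01 addr0. Qed.

Lemma ipC x y : ip y x = conjc (ip x y).
Proof. by have [_ [L _]] := H; apply L. Qed.

Lemma ipN1 x z : ip (- x) z = - ip x z.
Proof. by rewrite -scaleN1r ipZ1 mulN1r. Qed.

Lemma ipB1 x y z : ip (x - y) z = ip x z - ip y z.
Proof. by rewrite ipD1 ipN1. Qed.

Lemma ipD2 x y z : ip z (x + y) = ip z x + ip z y.
Proof. by rewrite ipC ipD1 rmorphD (ipC x z) (ipC y z). Qed.

Lemma ipZ2 a x z : ip z (a *: x) = conjc a * ip z x.
Proof. by rewrite ipC ipZ1 rmorphM (ipC x z). Qed.

Lemma ipB2 x y z : ip z (x - y) = ip z x - ip z y.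
Proof. by rewrite ipC ipB1 rmorphB (ipC x z) (ipC y z). Qed.

Lemma ipsum1 n (u : 'I_n -> V) z : ip (\sum_(i < n) u i) z = \sum_(i < n) ip (u i) z.
Proof. exact: (big_morph (fun w => ip w z) (fun a b => ipD1 a b z) (ip01 z)). Qed.

Lemma ipsum2 n (u : 'I_n -> V) z : ip z (\sum_(i < n) u i) = \sum_(i < n) ip z (u i).
Proof. rewrite ipC ipsum1 rmorph_sum; apply: eq_bigr => i _; by rewrite (ipC (u i) z). Qed.

Lemma ipge0 x : 0 <= ip x x.
Proof. by have [_ [_ [L _]]] := H. Qed.

Lemma ip0 x : ip x x = 0 -> x = 0.
Proof. by have [_ [_ [_ L]]] := H; apply L. Qed.

Lemma realconj {t : R[i]} : 0 <= t -> conjc t = t.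
Proof. move=> t0; exact: (geC0_conj t0). Qed.

Lemma CS x y : `|ip x y| ^+ 2 <= ip x x * ip y y.
Proof.
case: (eqVneq (ip y y) 0) => [t0|tn0].
  have -> : y = 0 by apply: ip0.
  have h0 : ip x 0 = 0 by rewrite ipC ip01 rmorph0.
  by rewrite h0 ip01 normr0 expr0n /= mulr0.
set t := ip y y; set c := ip x y.
have tgt0 : 0 < t by rewrite lt0r tn0 ipge0.
set z := t *: x - c *: y.
have hy : ip y z = 0.
  rewrite /z ipB2 !ipZ2 (realconj (ipge0 y)) -/t (ipC x y) -/c; by rewrite mulrC subrr.
have hz : ip z z = t * (t * ip x x - conjc c * c).
  rewrite {1}/z ipB1 !ipZ1 hy mulr0 subr0 /z ipB2 !ipZ2 (realconj (ipge0 y)) -/t -/c.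
  by rewrite mulrBr.
have := ipge0 z; rewrite hz pmulr_rge0 // subr_ge0.
have -> : conjc c * c = `|c| ^+ 2 by rewrite normCKC.
by rewrite mulrC.
Qed.

Lemma Bessel x n (e : 'I_n -> V) :
  (forall i j, ip (e i) (e j) = (i == j)%:R) ->
  \sum_(i < n) `|ip x (e i)| ^+ 2 <= ip x x.
Proof.
move=> He.
set z := x - \sum_(i < n) ip x (e i) *: e i.
have hj j : ip (e j) z = 0.
  rewrite /z ipB2 ipsum2 (bigD1 j) //= big1 => [|i /negPf ij].
    by rewrite addr0 ipZ2 He eqxx mulr1 (ipC x) subrr.
  by rewrite ipZ2 He eq_sym ij mulr0.
have hz : ip z z = ip x x - \sum_(i < n) `|ip x (e i)| ^+ 2.
  rewrite {1}/z ipB1 ipsum1 big1 ?subr0 => [|i _]; last by rewrite ipZ1 hj mulr0.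
  rewrite /z ipB2 ipsum2; congr (_ - _); apply: eq_bigr => i _.
  by rewrite ipZ2 normCKC.
by rewrite -subr_ge0 -hz ipge0.
Qed.

Lemma cmod_ge0' (z : R[i]) : 0 <= cmod z.
Proof. by rewrite -lecR -cmodC normr_ge0. Qed.

Lemma nnC {u : R[i]} : 0 <= u -> (cmod u)%:C = u.
Proof. by move=> u0; rewrite -cmodC ger0_norm. Qed.

Lemma CSr x y : cmod (ip x y) ^+ 2 <= cmod (ip x x) * cmod (ip y y).
Proof.
have h := CS x y; rewrite -(nnC (ipge0 x)) -(nnC (ipge0 y)) cmodC in h.
by rewrite -rmorphXn -rmorphM lecR in h.
Qed.

Lemma parar x y : cmod (ip (x + y) (x + y)) + cmod (ip (x - y) (x - y))
   = 2 * (cmod (ip x x) + cmod (ip y y)).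
Proof.
have CD (a b : R) : (a + b)%:C = a%:C + b%:C :> R[i] by exact: rmorphD.
have CM (a b : R) : (a * b)%:C = a%:C * b%:C :> R[i] by exact: rmorphM.
have C2 : (2 : R)%:C = 2 :> R[i] by exact: rmorph_nat.
have C1 : 1%:C = 1 :> R[i] by exact: rmorph1.
apply: complexI; rewrite !CD CM !CD !nnC ?ipge0 // C1.
rewrite !ipB1 !ipD1 !ipB2 !ipD2; ring.
Qed.

Lemma Besselr x n (e : nat -> V) :
  (forall i j : nat, ip (e i) (e j) = (i == j)%:R) ->
  \sum_(i < n) cmod (ip x (e i)) ^+ 2 <= cmod (ip x x).
Proof.
move=> He.
have h := @Bessel x n (fun i => e i) (fun i j => He i j).
rewrite -(nnC (ipge0 x)) in h.
have e2 : \sum_(i < n) `|ip x (e i)| ^+ 2 = (\sum_(i < n) cmod (ip x (e i)) ^+ 2)%:C.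
  rewrite rmorph_sum; apply: eq_bigr => i _; by rewrite cmodC rmorphXn.
by rewrite e2 lecR in h.
Qed.
End IP.

Section RIP.
Context {R : realType} {W : lmodType R} {ip : W -> W -> R}
  (H : is_rinner_product ip).

Lemma rD1 x y z : ip (x + y) z = ip x z + ip y z.
Proof. have [L _] := H. have := L 1 x y z. rewrite scale1r mul1r. done. Qed.

Lemma r01 z : ip 0 z = 0.
Proof. by apply: (addrI (ip 0 z)); rewrite addr0 -rD1 addr0. Qed.

Lemma rZ1 a x z : ip (a *: x) z = a * ip x z.
Proof. by have [L _] := H; rewrite -(addr0 (a *: x)) L r01 addr0. Qed.

Lemma rC x y : ip y x = ip x y.
Proof. by have [_ [L _]] := H; apply L. Qed.

Lemma rB1 x y z : ip (x - y) z = ip x z - ip y z.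
Proof. by rewrite rD1 -scaleN1r rZ1 mulN1r. Qed.

Lemma rD2 x y z : ip z (x + y) = ip z x + ip z y.
Proof. by rewrite rC rD1 (rC x z) (rC y z). Qed.

Lemma rB2 x y z : ip z (x - y) = ip z x - ip z y.
Proof. by rewrite rC rB1 (rC x z) (rC y z). Qed.

Lemma rge0 x : 0 <= ip x x.
Proof. by have [_ [_ [L _]]] := H. Qed.

Lemma rpolar x y : ip (x + y) (x + y) = ip (x - y) (x - y) + 4 * ip x y.
Proof. rewrite !rB1 !rD1 !rB2 !rD2 (rC x y); ring. Qed.
End RIP.


Lemma cmodM (R : realType) (u v : R[i]) : cmod (u * v) = cmod u * cmod v.
Proof. exact: Normc.normcM. Qed.

Lemma cmodX2 (R : realType) (u : R[i]) : cmod (u ^+ 2) = cmod u ^+ 2.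
Proof. by rewrite !expr2 cmodM. Qed.

Theorem mainTheorem3 (R : realType) (V : lmodType R[i])
  (ip' : V -> V -> R[i]) (ip : R -> V -> V -> R[i]) (nrm : R -> V -> R[i])
  (A B : R -> R) :
  is_cinner_product ip' ->
  (forall a : R, 0 < a <= 1 ->
     0 < A a /\ A a <= B a /\
     (forall x y : V, A a * cmod (ip' x y) <= cmod (ip a x y) /\
                      cmod (ip a x y) <= B a * cmod (ip' x y))) ->
  (forall (a : R) (x : V), nrm a x ^+ 2 = ip a x x) ->
  (forall a : R, 0 < a <= 1 -> forall x y : V,
     (* (i) fuzzy Cauchy-Schwarz *)
     cmod (ip a x y) <= B a / A a * cmod (nrm a x * nrm a y) /\
     (* (ii) fuzzy parallelogram inequality *)
     2 * A a / B a * (cmod (nrm a x ^+ 2) + cmod (nrm a y ^+ 2))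
       <= cmod (nrm a (x + y) ^+ 2) + cmod (nrm a (x - y) ^+ 2) /\
     cmod (nrm a (x + y) ^+ 2) + cmod (nrm a (x - y) ^+ 2)
       <= 2 * B a / A a * (cmod (nrm a x ^+ 2) + cmod (nrm a y ^+ 2))) /\
  (* (iv) fuzzy Bessel inequality *)
  (forall a : R, 0 < a <= 1 -> forall (e : nat -> V),
     (forall i j : nat, ip' (e i) (e j) = (i == j)%:R) ->
     forall x : V,
     (\sum_(i <oo) ((cmod (ip a x (e i)) ^+ 2)%:E)
       <= ((B a ^+ 2 / A a * cmod (nrm a x ^+ 2))%:E))%E) /\
  (* (iii) fuzzy polarization inequality, real case *)
  (forall (W : lmodType R) (ipW' : W -> W -> R) (ipW : R -> W -> W -> R[i])
          (nrmW : R -> W -> R[i]) (AW BW : R -> R),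
     is_rinner_product ipW' ->
     (forall a : R, 0 < a <= 1 ->
        0 < AW a /\ AW a <= BW a /\
        (forall x y : W, AW a * `|ipW' x y| <= cmod (ipW a x y) /\
                         cmod (ipW a x y) <= BW a * `|ipW' x y|)) ->
     (forall (a : R) (x : W), nrmW a x ^+ 2 = ipW a x x) ->
     forall a : R, 0 < a <= 1 -> forall x y : W,
       cmod (nrmW a (x + y) ^+ 2)
         <= BW a / AW a * (4 * cmod (ipW a x y) + cmod (nrmW a (x - y) ^+ 2))).
Proof.
move=> Hc Hb Hn; split; [|split].
- move=> a ha x y; have [A0 [AB Hxy]] := Hb a ha.
  have B0 : 0 < B a by apply: lt_le_trans AB.
  rewrite !Hn.
  have [l1 u1] := Hxy x y.
  have [lx ux] := Hxy x x. have [ly uy] := Hxy y y.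
  have [lp up] := Hxy (x + y) (x + y). have [lm um] := Hxy (x - y) (x - y).
  have cs := CSr Hc x y.
  have pr := parar Hc x y.
  have g1 := cmod_ge0' (ip' x y). have gx := cmod_ge0' (ip' x x).
  have gy := cmod_ge0' (ip' y y).
  have gP := cmod_ge0' (ip a x y).
  have nm : cmod (nrm a x * nrm a y) ^+ 2 = cmod (ip a x x) * cmod (ip a y y).
    by rewrite -!Hn cmodM !cmodX2 exprMn.
  have gM := cmod_ge0' (nrm a x * nrm a y).
  split; [|split].
  + have AQ : A a * cmod (ip' x y) <= cmod (nrm a x * nrm a y).
      have sq : (A a * cmod (ip' x y)) ^+ 2 <= cmod (nrm a x * nrm a y) ^+ 2.
        rewrite nm exprMn.
        apply: le_trans (_ : A a ^+ 2 * (cmod (ip' x x) * cmod (ip' y y)) <= _).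
          by rewrite ler_wpM2l // exprn_ge0 // ltW.
        rewrite expr2 mulrACA; apply: ler_pM => //; by rewrite mulr_ge0 // ltW.
      have gAQ : 0 <= A a * cmod (ip' x y) by rewrite mulr_ge0 // ltW.
      nra.
    rewrite mulrAC ler_pdivlMr //.
    apply: le_trans (_ : B a * cmod (ip' x y) * A a <= _).
      by rewrite ler_wpM2r // ltW.
    rewrite -mulrA (mulrC _ (A a)); have := ltW B0; nra.
  + rewrite mulrAC ler_pdivrMr //.
    have h1 := ler_wpM2l (ltW A0) ux. have h2 := ler_wpM2l (ltW A0) uy.
    have h3 := ler_wpM2l (ltW B0) lp. have h4 := ler_wpM2l (ltW B0) lm.
    nra.
  + rewrite mulrAC ler_pdivlMr //.
    have h1 := ler_wpM2l (ltW A0) up. have h2 := ler_wpM2l (ltW A0) um.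
    have h3 := ler_wpM2l (ltW B0) lx. have h4 := ler_wpM2l (ltW B0) ly.
    nra.
- move=> a ha e He x; have [A0 [AB Hxy]] := Hb a ha.
  have B0 : 0 < B a by apply: lt_le_trans AB.
  apply: lime_le.
    by apply: is_cvg_nneseries => n _ _; rewrite lee_fin exprn_ge0 // cmod_ge0'.
  apply: nearW => k; rewrite sumEFin lee_fin big_mkord.
  have bes := Besselr Hc x k e He.
  have [lx ux] := Hxy x x.
  rewrite Hn.
  apply: le_trans (_ : \sum_(i < k) B a ^+ 2 * cmod (ip' x (e i)) ^+ 2 <= _).
    apply: ler_sum => i _; have [_ u] := Hxy x (e i).
    have := cmod_ge0' (ip a x (e i)); nra.
  rewrite -mulr_sumr [X in _ <= X]mulrAC ler_pdivlMr // -mulrA.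
  have hS : (\sum_(i < k) cmod (ip' x (e i)) ^+ 2) * A a <= cmod (ip a x x) by nra.
  by rewrite ler_pM2l ?exprn_gt0.
- move=> W ipW' ipW nrmW AW BW Hr Hb' Hn' a ha x y.
  have [A0 [AB Hxy]] := Hb' a ha.
  have B0 : 0 < BW a by apply: lt_le_trans AB.
  rewrite !Hn'.
  have [l1 u1] := Hxy x y. have [lp up] := Hxy (x + y) (x + y).
  have [lm um] := Hxy (x - y) (x - y).
  have pol := rpolar Hr x y.
  have g1 := rge0 Hr (x + y). have g2 := rge0 Hr (x - y).
  rewrite ger0_norm // in lp up. rewrite ger0_norm // in lm um.
  have h3 : ipW' x y <= `|ipW' x y| by apply: ler_norm.
  rewrite mulrAC ler_pdivlMr //.
  have hq : AW a * ipW' x y <= AW a * `|ipW' x y| by rewrite ler_pM2l.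
  have hs : AW a * ipW' (x - y) (x - y) + 4 * (AW a * ipW' x y)
            <= cmod (ipW a (x - y) (x - y)) + 4 * cmod (ipW a x y) by lra.
  have hB : BW a * (AW a * ipW' (x - y) (x - y) + 4 * (AW a * ipW' x y))
            <= BW a * (cmod (ipW a (x - y) (x - y)) + 4 * cmod (ipW a x y)).
    by rewrite ler_pM2l.
  have hA : cmod (ipW a (x + y) (x + y)) * AW a <= BW a * ipW' (x + y) (x + y) * AW a.
    by rewrite ler_pM2r.
  rewrite pol in hA.
  apply: le_trans hA _.
  have -> : BW a * (ipW' (x - y) (x - y) + 4 * ipW' x y) * AW a
     = BW a * (AW a * ipW' (x - y) (x - y) + 4 * (AW a * ipW' x y)) by ring.
  by rewrite [4 * _ + _]addrC.
Qed.
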